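(* Let $D$ be an $S$-subalgebra of $\mathbb{C}\langle u,v\rangle$ containing $s_1=uv+vu$, and let $b\ge 1$, $c\ge 0$ be integers such that $p_{(b,c)}=u^bv^c+v^bu^c\in D$. Then $uvu^bv^c+vuv^bu^c\in D$ and $p_{(b+1,c+1)}=u^{b+1}v^{c+1}+v^{b+1}u^{c+1}\in D$. In particular, if $D$ contains $s_1$, then $D$ contains $s_a=u^av^a+v^au^a$ for every $a\ge 1$.
   Context: $\mathbb{C}\langle u,v\rangle$ is the free associative unital algebra over $\mathbb C$ on noncommuting $u,v$, with homogeneous components $\mathbb{C}\langle u,v\rangle^{(k)}$ of total degree $k$. For each $k$, $\mathrm{Sym}(k)$ acts on $\mathbb{C}\langle u,v\rangle^{(k)}$ by permuting positions: $(x_{i_1}\cdots x_{i_k})\circ\pi=x_{i_{\pi^{-1}(1)}}\cdots x_{i_{\pi^{-1}(k)}}$ for monomials with $x_{i_j}\in\{u,v\}$, extended linearly. An $S$-subalgebra is a graded unital subalgebra $F=\bigoplus_kF^{(k)}$ with $F^{(k)}\circ\mathrm{Sym}(k)=F^{(k)}$ for all $k$. *)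

(* Defs.v *)
From HB Require Import structures.
From mathcomp Require Import all_boot all_order all_algebra all_fingroup.
From mathcomp Require Import Rstruct complex.
From Stdlib Require Rdefinitions.
Set Implicit Arguments. Unset Strict Implicit. Unset Printing Implicit Defensive.
Import Order.TTheory GRing.Theory Num.Theory.
Local Open Scope ring_scope.

Definition CC : fieldType := (Rdefinitions.R)[i].

(* Letters: false = u, true = v.  A word (monomial) of length k is a map
   'I_k -> bool : position i carries the letter x_{i}. *)
Definition word (k : nat) := {ffun 'I_k -> bool}.

(* The homogeneous component C<u,v>^(k): linear combinations of words of length
   k, represented by their coefficient function  (word k -> C). *)
Definition hcomp (k : nat) := {ffun word k -> CC}.

Definition letters k (w : word k) : seq bool := [seq w i | i <- enum 'I_k].

(* The monomial given by a sequence of letters s, viewed in degree k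
   (s should have size k). *)
Definition mono (k : nat) (s : seq bool) : hcomp k :=
  [ffun w : word k => (letters w == s)%:R].

(* Product C<u,v>^(k) x C<u,v>^(l) -> C<u,v>^(k+l) (concatenation of words,
   extended bilinearly): the coefficient of a word w of length k+l is
   f(first k letters of w) * g(last l letters of w). *)
Definition hmul k l (f : hcomp k) (g : hcomp l) : hcomp (k + l)%N :=
  [ffun w : word (k + l) =>
     f [ffun i => w (lshift l i)] * g [ffun j => w (rshift k j)]].

Definition hone : hcomp 0%N := [ffun _ => 1].

(* Right action of Sym(k):
   (x_{i_1}...x_{i_k}) o pi = x_{i_{pi^-1(1)}} ... x_{i_{pi^-1(k)}},
   so the coefficient of the word w' in f o pi is the coefficient of w' o pi
   in f. *)
Definition hact k (f : hcomp k) (pi : 'S_k) : hcomp k :=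
  [ffun w : word k => f [ffun i => w (pi i)]].

(* A graded subspace F = (+)_k F^(k) of C<u,v> is given by its homogeneous
   components F k; it is an S-subalgebra when each F^(k) is a linear subspace,
   1 \in F^(0), F^(k) F^(l) \subseteq F^(k+l), and F^(k) o Sym(k) = F^(k). *)
Definition S_subalgebra (F : forall k, {pred hcomp k}) : Prop :=
  (forall k, 0 \in F k) /\
  (forall k (f g : hcomp k), f \in F k -> g \in F k -> f + g \in F k) /\
  (forall k (a : CC) (f : hcomp k), f \in F k -> a *: f \in F k) /\
  hone \in F 0%N /\
  (forall k l (f : hcomp k) (g : hcomp l),
      f \in F k -> g \in F l -> hmul f g \in F (k + l)%N) /\
  (forall k (f : hcomp k) (pi : 'S_k), f \in F k -> hact f pi \in F k).

Definition pbc (b c : nat) : hcomp (b + c)%N :=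
  mono (b + c)%N (nseq b false ++ nseq c true) +
  mono (b + c)%N (nseq b true ++ nseq c false).

Definition s1 : hcomp 2%N := mono 2%N [:: false; true] + mono 2%N [:: true; false].

Definition sa (a : nat) : hcomp (a + a)%N := pbc a a.

Definition uvpbc (b c : nat) : hcomp (2 + (b + c))%N :=
  mono (2 + (b + c))%N ([:: false; true] ++ nseq b false ++ nseq c true) +
  mono (2 + (b + c))%N ([:: true; false] ++ nseq b true ++ nseq c false).

(* Main.v *)
Require Import Defs.
From mathcomp Require Import all_boot all_order all_algebra all_fingroup.
From mathcomp Require Import zify ring lra.
From mathcomp Require Import Rstruct complex.
Import GRing.Theory Num.Theory.
Local Open Scope ring_scope.
Set Implicit Arguments. Unset Strict Implicit.

Definition ind k (t : 'I_k -> bool) : hcomp k := [ffun w => (w == finfun t)%:R].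

Lemma mono_ind k s : size s = k -> mono k s = ind (fun i : 'I_k => nth false s i).
Proof.
move=> hs; apply/ffunP=> w; rewrite !ffunE; congr ((nat_of_bool _)%:R).
apply/idP/idP => /eqP h; apply/eqP.
- rewrite -h; by apply/ffunP=> i; rewrite ffunE /letters (nth_map i) ?size_enum_ord // nth_ord_enum.
- rewrite h; apply: (@eq_from_nth _ false); first by rewrite size_map size_enum_ord.
  rewrite size_map size_enum_ord => i hi.
  by rewrite (nth_map (Ordinal hi)) ?size_enum_ord // ffunE nth_enum_ord.
Qed.

Lemma hact_ind k t (pi : 'S_k) : hact (ind t) pi = ind (fun i => t (pi^-1 i)%g).
Proof.
apply/ffunP=> w; rewrite !ffunE; congr ((nat_of_bool _)%:R); apply/idP/idP => /eqP/ffunP h;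
  apply/eqP/ffunP=> i; rewrite !ffunE.
- by move: (h (pi^-1 i)%g); rewrite !ffunE permKV.
- by move: (h (pi i)); rewrite !ffunE permK.
Qed.

Lemma eq_ind k (t1 t2 : 'I_k -> bool) : t1 =1 t2 -> ind t1 = ind t2.
Proof. by move=> h; rewrite /ind (eq_ffun _ h). Qed.

Lemma hmul_ind k l (t1 : 'I_k -> bool) (t2 : 'I_l -> bool) :
  hmul (ind t1) (ind t2) =
  ind (fun i : 'I_(k + l) => match split i with inl j => t1 j | inr j => t2 j end).
Proof.
apply/ffunP=> w; rewrite !ffunE -natrM mulnb; congr ((nat_of_bool _)%:R).
apply/idP/idP => [/andP[/eqP h1 /eqP h2]|/eqP ->]; [apply/eqP|apply/andP].
- apply/ffunP=> i; rewrite ffunE; case: splitP => j /= hij.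
  + have -> : i = lshift l j by apply: val_inj.
    by move/ffunP: h1 => /(_ j); rewrite !ffunE.
  + have -> : i = rshift k j by apply: val_inj.
    by move/ffunP: h2 => /(_ j); rewrite !ffunE.
- split; apply/eqP/ffunP=> j; rewrite !ffunE.
  + by rewrite (unsplitK (inl _ j)).
  + by rewrite (unsplitK (inr _ j)).
Qed.

Lemma hmul_mono k l s s' : size s = k -> size s' = l ->
  hmul (mono k s) (mono l s') = mono (k + l) (s ++ s').
Proof.
move=> hs hs'; rewrite !mono_ind ?size_cat ?hs ?hs' // hmul_ind.
apply: eq_ind => i; case: splitP => j hij; rewrite nth_cat hij hs.
- by rewrite ltn_ord.
- by rewrite ltnNge leq_addr /= addKn.
Qed.

Lemma hmul_addl k l (f g : hcomp k) (h : hcomp l) : hmul (f + g) h = hmul f h + hmul g h.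
Proof. by apply/ffunP=> w; rewrite !ffunE mulrDl. Qed.
Lemma hmul_addr k l (f : hcomp k) (g h : hcomp l) : hmul f (g + h) = hmul f g + hmul f h.
Proof. by apply/ffunP=> w; rewrite !ffunE mulrDr. Qed.
Lemma hact_add k (f g : hcomp k) pi : hact (f + g) pi = hact f pi + hact g pi.
Proof. by apply/ffunP=> w; rewrite !ffunE. Qed.
Lemma hact_scale k a (f : hcomp k) pi : hact (a *: f) pi = a *: hact f pi.
Proof. by apply/ffunP=> w; rewrite !ffunE. Qed.

Lemma hact_mono_tperm k s x y (hx : (x < k)%N) (hy : (y < k)%N) : size s = k ->
  hact (mono k s) (tperm (Ordinal hx) (Ordinal hy)) =
  ind (fun i : 'I_k => nth false s (if nat_of_ord i == x then y else if nat_of_ord i == y then x else nat_of_ord i)).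
Proof.
move=> hs; rewrite mono_ind // hact_ind tpermV; apply: eq_ind => i /=.
case: tpermP => [->|->|hix hiy] /=; first by rewrite eqxx.
- by case: eqP => [->|_]; rewrite ?eqxx.
- have -> : (val i == x) = false.
    by apply/negbTE/eqP => h; apply: hix; apply: val_inj.
  have -> : (val i == y) = false.
    by apply/negbTE/eqP => h; apply: hiy; apply: val_inj.
  done.
Qed.

Lemma nth_nn b c x y n : nth false (nseq b x ++ nseq c y) n =
  if (n < b)%N then x else if (n < b + c)%N then y else false.
Proof.
rewrite nth_cat size_nseq !nth_nseq; case: (ltnP n b) => h //.
by congr (if _ then _ else _); apply/idP/idP => ?; lia.
Qed.

Lemma nth4 b c x0 x1 y z n : nth false ([:: x0; x1] ++ nseq b y ++ nseq c z) n =
  if n == 0%N then x0 else if n == 1%N then x1 else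
  if (n < b + 2)%N then y else if (n < b + c + 2)%N then z else false.
Proof.
case: n => [|[|n]] //=; rewrite nth_nn.
have -> : (n.+2 < b + 2)%N = (n < b)%N by lia.
have -> : (n.+2 < b + c + 2)%N = (n < b + c)%N by lia.
done.
Qed.

Ltac ptw := apply: eq_ind; let n := fresh "n" in let hn := fresh "hn" in
  case=> n hn; change (nat_of_ord (Ordinal hn)) with n;
  repeat (case: ifP => ?); rewrite ?nth4 ?nth_nn; repeat (case: ifP => ?); try done; lia.

Lemma step (D : forall k, {pred hcomp k}) : S_subalgebra D -> s1 \in D 2%N ->
  forall b c : nat, (1 <= b)%N -> pbc b c \in D (b + c)%N ->
     uvpbc b c \in D (2 + (b + c))%N /\ pbc b.+1 c.+1 \in D (b.+1 + c.+1)%N.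
Proof.
case=> [_ [Hadd [Hsc [_ [Hmul Hact]]]]] hs1 b c hb hp.
have hX := Hmul _ _ _ _ hs1 hp.
have h0 : (0 < 2 + (b + c))%N by lia.
have h1 : (1 < 2 + (b + c))%N by lia.
have h2 : (2 < 2 + (b + c))%N by lia.
have hb1 : (b + 1 < 2 + (b + c))%N by lia.
set tau := tperm (Ordinal h0) (Ordinal h2).
set rho := tperm (Ordinal h1) (Ordinal h2).
have hXt := Hact _ _ tau hX.
have hXr := Hact _ _ rho hX.
have sz : forall x y z w, size ([:: x; y] ++ nseq b z ++ nseq c w) = (2 + (b + c))%N.
  by move=> *; rewrite !size_cat !size_nseq.
set M1 := mono (2 + (b + c)) ([:: false; true] ++ nseq b false ++ nseq c true).
set M2 := mono (2 + (b + c)) ([:: false; true] ++ nseq b true ++ nseq c false).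
set M3 := mono (2 + (b + c)) ([:: true; false] ++ nseq b false ++ nseq c true).
set M4 := mono (2 + (b + c)) ([:: true; false] ++ nseq b true ++ nseq c false).
have eX : hmul s1 (pbc b c) = (M1 + M2) + (M3 + M4).
  by rewrite /s1 /pbc hmul_addl !hmul_addr !hmul_mono ?size_cat ?size_nseq.
have e1 : hact M1 tau = M1 by rewrite /M1 hact_mono_tperm ?mono_ind ?sz //; ptw.
have e4 : hact M4 tau = M4 by rewrite /M4 hact_mono_tperm ?mono_ind ?sz //; ptw.
have e5 : hact M2 rho = M2 by rewrite /M2 hact_mono_tperm ?mono_ind ?sz //; ptw.
have e6 : hact M3 rho = M3 by rewrite /M3 hact_mono_tperm ?mono_ind ?sz //; ptw.
have e2 : hact M2 tau = hact M4 rho by rewrite /M2 /M4 !hact_mono_tperm ?sz //; ptw.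
have e3 : hact M3 tau = hact M1 rho by rewrite /M3 /M1 !hact_mono_tperm ?sz //; ptw.
have H1 : uvpbc b c = 2^-1 *: (hmul s1 (pbc b c) + hact (hmul s1 (pbc b c)) tau
                                + (-1) *: hact (hmul s1 (pbc b c)) rho).
  rewrite eX !hact_add e1 e2 e3 e4 e5 e6.
  rewrite /uvpbc -/M1 -/M4.
  clear eX e1 e2 e3 e4 e5 e6 hX hXt hXr.
  move: M1 M2 M3 M4 (hact M4 rho) (hact M1 rho) => m1 m2 m3 m4 x y.
  apply/ffunP => w; rewrite !ffunE.
  have sE : forall p q : CC, p *: q = p * q by [].
  have two : (2:CC) != 0 by rewrite pnatr_eq0.
  rewrite !sE; by field.
have huv : uvpbc b c \in D (2 + (b + c))%N.
  by rewrite H1; apply (Hsc); apply (Hadd); [apply (Hadd)|apply (Hsc)].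
split => //.
have Hs : hact (uvpbc b c) (tperm (Ordinal h1) (Ordinal hb1)) =
   mono (2 + (b + c)) (nseq b.+1 false ++ nseq c.+1 true) +
   mono (2 + (b + c)) (nseq b.+1 true ++ nseq c.+1 false).
  rewrite /uvpbc hact_add !hact_mono_tperm ?sz // !mono_ind;
    try by rewrite size_cat !size_nseq; lia.
  by congr (_ + _); ptw.
rewrite /pbc.
have E : (b.+1 + c.+1 = 2 + (b + c))%N by lia.
rewrite E -Hs; exact: Hact.
Qed.

Theorem mainTheorem4 (D : forall k, {pred hcomp k}) :
  S_subalgebra D -> s1 \in D 2%N ->
  (forall b c : nat, (1 <= b)%N -> pbc b c \in D (b + c)%N ->
     uvpbc b c \in D (2 + (b + c))%N /\ pbc b.+1 c.+1 \in D (b.+1 + c.+1)%N) /\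
  (forall a : nat, (1 <= a)%N -> sa a \in D (a + a)%N).
Proof.
move=> HD hs1; split; first exact: step.
elim=> [//|[|a] IH] _; first exact: hs1.
by have [_ ->] := step HD hs1 (isT : (1 <= a.+1)%N) (IH isT).
Qed.
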